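(* Consider the random basic walk on the integer lattice $\mathbb{Z}^2$ (vertices $\mathbb{Z}^2$, edges between points at Euclidean distance $1$). For any starting vertex and any initial port, the random basic walk cycles with probability $1$.
   Context: Graphs are connected, countable and locally finite; each undirected edge $\{v,w\}$ is regarded as two arcs $v\to w$ and $w\to v$. A labeling assigns, at each vertex $v$ of degree $\deg(v)$, the port numbers $1,\dots,\deg(v)$ bijectively to the arcs leaving $v$ (labels on $v\to w$ and $w\to v$ need not agree). In a random labeling these bijections are chosen uniformly at random, independently for different vertices. Given a labeling, a starting vertex $v_0$ and an initial port $\ell$, the basic walk leaves $v_0$ along the arc labeled $\ell$; thereafter, whenever it enters a vertex $v$ along an arc whose label (at the tail of that arc) is $i$, it leaves $v$ along the arc out of $v$ labeled $(i \bmod \deg(v))+1$. The random basic walk is the basic walk for a random labeling. The walk cycles if some arc is traversed twice in the same direction (equivalently, from some point on the walk is periodic and visits only finitely many vertices); it is transient if it does not cycle, i.e. it visits infinitely many vertices, each only finitely often. *)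

(* Defs.v *)
From HB Require Import structures.
From mathcomp Require Import all_boot all_order all_algebra all_fingroup.
From mathcomp Require Import all_classical all_reals.
From mathcomp Require Import ereal measure.
Set Implicit Arguments. Unset Strict Implicit. Unset Printing Implicit Defensive.
Import GRing.Theory Num.Theory.

Local Open Scope ring_scope.
Local Open Scope classical_set_scope.

Definition vertex := (int * int)%type.

(* The four arcs leaving a vertex v (each vertex of Z^2 has degree 4) are
   indexed by directions d : 'I_4, the arc v -> v + dir d, with
   0 : (1,0), 1 : (0,1), 2 : (-1,0), 3 : (0,-1). *)
Definition dir (d : 'I_4) : int * int :=
  match val d with
  | 0%N => (1, 0)
  | 1%N => (0, 1)
  | 2%N => (-1, 0)
  | _ => (0, -1)
  end.

Definition vadd (v : vertex) (w : int * int) : vertex := (v.1 + w.1, v.2 + w.2).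

(* A labeling: at each vertex v a bijection from ports to arcs leaving v.
   Port number p+1 (p : 'I_4) is assigned to the arc in direction (lab v p). *)
Definition labeling := vertex -> {perm 'I_4}.

HB.instance Definition _ := gen_eqMixin labeling.
HB.instance Definition _ := gen_choiceMixin labeling.
HB.instance Definition _ := isPointed.Build labeling (fun _ => 1%g).


Definition arc := (vertex * 'I_4)%type.

(* The successor port: label i |-> (i mod 4) + 1, i.e. 0-based p |-> p+1 mod 4. *)
Definition next_port (p : 'I_4) : 'I_4 := ordS p.

(* One step of the basic walk: having traversed arc (v,d), enter w = v + dir d
   along an arc whose label at its tail v is (lab v)^-1 d; leave w along the arc
   labeled with the next port. *)
Definition walk_step (lab : labeling) (a : arc) : arc :=
  let: (v, d) := a in
  let w := vadd v (dir d) in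
  (w, lab w (next_port ((lab v)^-1%g d))).

(* The n-th arc traversed by the basic walk started at v0 with initial port l
   (port number val l + 1). *)
Definition basic_walk (lab : labeling) (v0 : vertex) (l : 'I_4) (n : nat) : arc :=
  iter n (walk_step lab) (v0, lab v0 l).

Definition cycles (lab : labeling) (v0 : vertex) (l : 'I_4) : Prop :=
  exists m n : nat, (m < n)%N /\ basic_walk lab v0 l m = basic_walk lab v0 l n.

Definition coord_events : set (set labeling) :=
  [set A | exists (v : vertex) (s : {perm 'I_4}), A = [set lab | lab v = s]].

Notation Lab := (g_sigma_algebraType coord_events).

(* Random labeling: the bijections at distinct vertices are independent and
   uniform on the 4! = 24 bijections, i.e. every finite cylinder event fixing
   the labelings at k distinct vertices has probability 24^-k. *)
Definition random_labeling_law (R : realType)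
    (P : probability Lab R) : Prop :=
  forall s : seq (vertex * {perm 'I_4}),
    uniq (map fst s) ->
    P [set lab : Lab | all (fun vs => lab vs.1 == vs.2) s]
      = (((24%:R : R)^-1) ^+ size s)%:E.

(* Main.v *)
Require Import Defs.
From HB Require Import structures.
From mathcomp Require Import all_boot all_order all_algebra all_fingroup.
From mathcomp Require Import all_classical all_reals.
From mathcomp Require Import ereal measure.
From mathcomp Require Import zify lra.
Set Implicit Arguments. Unset Strict Implicit. Unset Printing Implicit Defensive.
Import Order.TTheory GRing.Theory Num.Theory.
Local Open Scope ring_scope.
Local Open Scope classical_set_scope.

Definition sat (lab : labeling) (s : seq (vertex * {perm 'I_4})) : bool :=
  all (fun vs => lab vs.1 == vs.2) s.

Definition Cyl (s : seq (vertex * {perm 'I_4})) : set Lab := [set lab | sat lab s].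

Lemma Cyl_meas s : measurable (Cyl s).
Proof.
elim: s => [|vs s IH].
  have -> : Cyl [::] = setT by apply/seteqP; split.
  exact: measurableT.
have -> : Cyl (vs :: s) = [set lab : Lab | lab vs.1 = vs.2] `&` Cyl s.
  apply/seteqP; split => lab /=; rewrite /Cyl /sat /=.
    by case/andP => /eqP -> ->.
  by case => -> ->; rewrite eqxx.
apply: measurableI => //. apply: sub_gen_smallest. by exists vs.1, vs.2.
Qed.

Definition UF (T : eqType) (G : seq T) (F : T -> set Lab) : set Lab :=
  [set x | exists2 t, t \in G & F t x].

Lemma UF_cons (T : eqType) (t : T) G F : UF (t :: G) F = F t `|` UF G F.
Proof.
apply/seteqP; split => x /=.
  case=> t'; rewrite inE => /orP [/eqP -> | ]; first by left.
  by move=> tG Fx; right; exists t'.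
case=> [Fx | [t' tG Fx]]; first by exists t; rewrite ?inE ?eqxx.
by exists t'; rewrite // inE tG orbT.
Qed.

Lemma UF_meas (T : eqType) (G : seq T) F :
  (forall t, t \in G -> measurable (F t)) -> measurable (UF G F).
Proof.
elim: G => [|t G IH] H.
  have -> : UF [::] F = set0 by apply/seteqP; split => x // [].
  exact: measurable0.
rewrite UF_cons; apply: measurableU; first by apply: H; rewrite inE eqxx.
by apply: IH => t' t'G; apply: H; rewrite inE t'G orbT.
Qed.

Section WithP.
Variables (R : realType) (P : probability Lab R).

Lemma measure_UF (T : eqType) (G : seq T) F (c : R) : uniq G ->
  (forall t, t \in G -> measurable (F t)) ->
  (forall t t', t \in G -> t' \in G -> t != t' -> F t `&` F t' = set0) ->
  (forall t, t \in G -> P (F t) = c%:E) ->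
  P (UF G F) = ((size G)%:R * c)%:E.
Proof.
elim: G => [|t G IH] /= uG Hm Hd Hc.
  have -> : UF [::] F = set0 by apply/seteqP; split => x // [].
  by rewrite measure0 mul0r.
case/andP: uG => tG uG.
rewrite UF_cons measureU.
- have E1 : P (F t) = c%:E by apply: Hc; rewrite inE eqxx.
  rewrite [X in X + _ = _](_ : _ = c%:E); last exact: E1.
  rewrite [X in _ + X = _](_ : _ = ((size G)%:R * c)%:E); last apply: IH => //.
  + by rewrite -EFinD mulrSr mulrDl mul1r addrC.
  + by move=> t' h; apply: Hm; rewrite inE h orbT.
  + by move=> t1 t2 h1 h2; apply: Hd; rewrite inE ?h1 ?h2 orbT.
  + by move=> t' h; apply: Hc; rewrite inE h orbT.
- by apply: Hm; rewrite inE eqxx.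
- by apply: UF_meas => t' h; apply: Hm; rewrite inE h orbT.
- apply/seteqP; split => x // [Fx [t' t'G Fx']].
  have : F t `&` F t' = set0.
    apply: Hd; rewrite ?inE ?eqxx ?t'G ?orbT //.
    by apply/eqP => e; move: tG; rewrite e t'G.
  by move/seteqP => [+ _] => /(_ x (conj Fx Fx')).
Qed.

End WithP.

Definition agree (S : seq vertex) (lab lab' : labeling) :=
  forall v, v \in S -> lab v = lab' v.

Definition dep (S : seq vertex) (A : set Lab) :=
  forall lab lab', agree S lab lab' -> A lab -> A lab'.

Lemma agree_sym S lab lab' : agree S lab lab' -> agree S lab' lab.
Proof. by move=> h v vS; rewrite h. Qed.

Definition ext (S : seq vertex) (t : seq {perm 'I_4}) : labeling :=
  fun v => nth 1%g t (index v S).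

Lemma ext_map S lab : agree S (ext S (map lab S)) lab.
Proof.
move=> v vS; rewrite /ext (nth_map v) ?index_mem // nth_index //.
Qed.

Lemma sat_zip lab S (t : seq {perm 'I_4}) : size t = size S ->
  sat lab (zip S t) = (map lab S == t).
Proof.
elim: S t => [|v S IH] [|p t] //= [e].
by rewrite /sat /= -/(sat lab (zip S t)) IH // eqseq_cons.
Qed.

Lemma sat_cat lab s1 s2 : sat lab (s1 ++ s2) = sat lab s1 && sat lab s2.
Proof. by rewrite /sat all_cat. Qed.

Definition Tup (S : seq vertex) := ((size S).-tuple {perm 'I_4}).

Definition Gof (S : seq vertex) (A : set Lab) : seq (Tup S) :=
  seq.filter (fun t : Tup S => `[< A (ext S t) >]) (enum {: Tup S}).

Lemma mem_Gof S A (t : Tup S) : (t \in Gof S A) = `[< A (ext S t) >].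
Proof. by rewrite mem_filter mem_enum andbT. Qed.

Lemma uniq_Gof S A : uniq (Gof S A).
Proof. by rewrite filter_uniq // enum_uniq. Qed.

Definition tup_of S (lab : labeling) : Tup S := map_tuple lab (in_tuple S).

Lemma Cyl_zipE S (t : Tup S) lab : Cyl (zip S t) lab <-> map lab S = t.
Proof. by rewrite /Cyl /= sat_zip ?size_tuple //; split => /eqP. Qed.

Lemma ext_agree S (t : Tup S) lab : map lab S = t -> agree S (ext S t) lab.
Proof. by move=> <-; exact: ext_map. Qed.

Lemma dep_rep S A : dep S A ->
  A = UF (Gof S A) (fun t => Cyl (zip S t)).
Proof.
move=> dA; apply/seteqP; split => lab.
  move=> Alab; exists (tup_of S lab).
    rewrite mem_Gof; apply/asboolP.
    apply: (dA lab) => //; apply: agree_sym; exact: ext_map.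
  by apply/Cyl_zipE.
case=> t; rewrite mem_Gof => /asboolP At /Cyl_zipE e.
by apply: (dA (ext S t)) => //; apply: ext_agree.
Qed.

Lemma dep_meas S A : dep S A -> measurable A.
Proof.
move=> dA; rewrite (dep_rep dA); apply: UF_meas => t _; exact: Cyl_meas.
Qed.

Section Indep.
Variables (R : realType) (P : probability Lab R) (HP : random_labeling_law P).

Lemma Cyl_prob s : uniq (map fst s) -> P (Cyl s) = (((24%:R : R)^-1) ^+ size s)%:E.
Proof. by move=> u; apply: HP. Qed.

Lemma dep_indep S A (g : labeling -> seq (vertex * {perm 'I_4})) m :
  uniq S -> dep S A ->
  (forall lab, A lab -> [/\ size (g lab) = m, uniq (map fst (g lab)) &
                          all (fun vs => vs.1 \notin S) (g lab)]) ->
  (forall lab lab', agree S lab lab' -> A lab -> g lab = g lab') ->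
  P (A `&` [set lab | sat lab (g lab)]) =
  (P A * (((24%:R : R)^-1) ^+ m)%:E)%E.
Proof.
move=> uS dA Hg Hgd.
have eA : A `&` [set lab | sat lab (g lab)] =
    UF (Gof S A) (fun t => Cyl (zip S t ++ g (ext S t))).
  apply/seteqP; split => lab.
    case=> Alab slab; exists (tup_of S lab).
      rewrite mem_Gof; apply/asboolP.
      apply: (dA lab) => //; apply: agree_sym; exact: ext_map.
    rewrite /Cyl /= sat_cat; apply/andP; split.
      by rewrite sat_zip ?size_map ?eqxx.
    rewrite (Hgd (ext S (map lab S)) lab) //; first exact: ext_map.
    apply: (dA lab) => //; apply: agree_sym; exact: ext_map.
  case=> t; rewrite mem_Gof => /asboolP At; rewrite /Cyl /= sat_cat.
  case/andP => /(Cyl_zipE) e sg.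
  have ag := ext_agree e.
  split; first by apply: (dA (ext S t)).
  by rewrite /= -(Hgd _ _ ag At).
have disj : forall (G : seq (Tup S)) (F : Tup S -> seq (vertex * {perm 'I_4})) (t1 t2 : Tup S),
    t1 \in G -> t2 \in G -> t1 != t2 ->
    Cyl (zip S t1 ++ F t1) `&` Cyl (zip S t2 ++ F t2) = set0.
  move=> G F t1 t2 _ _ ne; apply/seteqP; split => lab // [].
  rewrite /Cyl /= !sat_cat => /andP [/(Cyl_zipE) e1 _] /andP [/(Cyl_zipE) e2 _].
  by move/eqP: ne; apply; apply: val_inj; rewrite /= -e1 -e2.
have h1 : P A = ((size (Gof S A))%:R * (24%:R^-1) ^+ size S)%:E.
  rewrite {1}(dep_rep dA) (@measure_UF R P _ _ _ ((24%:R^-1) ^+ size S)) //.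
  - exact: uniq_Gof.
  - by move=> t _; exact: Cyl_meas.
  - move=> t t' ht ht' ne; have := disj (Gof S A) (fun=> [::]) _ _ ht ht' ne.
    by rewrite !cats0.
  - move=> t _; rewrite Cyl_prob ?size_zip ?size_tuple ?minnn //.
    by rewrite [map _ _]unzip1_zip ?size_tuple.
have h2 : P (A `&` [set lab | sat lab (g lab)]) =
   ((size (Gof S A))%:R * (24%:R^-1) ^+ (size S + m))%:E.
  rewrite eA (@measure_UF R P _ _ _ ((24%:R^-1) ^+ (size S + m))) //.
  - exact: uniq_Gof.
  - by move=> t _; exact: Cyl_meas.
  - by move=> t t' ht ht' ne; exact: (disj _ (fun t => g (ext S t)) _ _ ht ht' ne).
  move=> t1; rewrite mem_Gof => /asboolP At.
  have [sz u al] := Hg _ At.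
  rewrite Cyl_prob ?size_cat ?size_zip ?size_tuple ?minnn ?sz //.
  rewrite map_cat [map _ (zip _ _)]unzip1_zip ?size_tuple // cat_uniq uS u andbT /=.
  apply/hasPn => v /mapP [vs vsg ->]; by move/allP: al => /(_ vs vsg).
rewrite h2 h1 -EFinM exprD mulrA //.
Qed.

End Indep.

Section Walk.
Variables (v0 : vertex) (l : 'I_4).

Definition bw (lab : labeling) n := basic_walk lab v0 l n.
Definition tl lab n := (bw lab n).1.
Definition hd lab n := vadd (tl lab n) (dir (bw lab n).2).

Lemma bw0 lab : bw lab 0 = (v0, lab v0 l).
Proof. by []. Qed.

Lemma tl0 lab : tl lab 0 = v0.
Proof. by []. Qed.

Lemma bwS lab n : bw lab n.+1 = walk_step lab (bw lab n).
Proof. by rewrite /bw /basic_walk iterS. Qed.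

Lemma bwS_eq lab n : bw lab n.+1 =
  (hd lab n, lab (hd lab n) (next_port ((lab (tl lab n))^-1%g (bw lab n).2))).
Proof. by rewrite bwS /hd /tl; case: (bw lab n). Qed.

Lemma tlS lab n : tl lab n.+1 = hd lab n.
Proof. by rewrite /tl bwS_eq. Qed.

Lemma walk_agree lab lab' n :
  (forall m, (m <= n)%N -> lab (tl lab m) = lab' (tl lab m)) ->
  forall m, (m <= n)%N -> bw lab m = bw lab' m.
Proof.
move=> H; elim=> [|m IH] hm.
  by rewrite !bw0 -(H 0%N) ?tl0.
rewrite !bwS_eq.
have e : bw lab m = bw lab' m by apply: IH; apply: ltnW.
have eh : hd lab m = hd lab' m by rewrite /hd /tl e.
have et : tl lab m = tl lab' m by rewrite /tl e.
have h1 := H m.+1 hm; rewrite tlS in h1.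
have h2 := H m (ltnW hm).
by rewrite -eh -et -e -h1 -h2.
Qed.

Definition norm (v : vertex) : nat := (absz v.1 + absz v.2)%N.

Lemma norm_step v d : (norm (vadd v (dir d)) <= (norm v).+1)%N /\
   (norm v <= (norm (vadd v (dir d))).+1)%N.
Proof.
case: d => [[|[|[|[|]]]] h] //; rewrite /norm /vadd /dir /=; lia.
Qed.

Definition zr (r : nat) : seq int := [seq (i%:Z - r%:Z) | i <- iota 0 (r.*2.+1)].

Lemma zr_uniq r : uniq (zr r).
Proof.
rewrite map_inj_uniq ?iota_uniq // => i j /= e; lia.
Qed.

Lemma mem_zr r (x : int) : (absz x <= r)%N -> x \in zr r.
Proof.
move=> h; apply/mapP; exists (absz (x + r%:Z)).
  rewrite mem_iota; lia.
lia.
Qed.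

Definition vball (r : nat) : seq vertex :=
  [seq v <- [seq (x, y) | x <- zr r, y <- zr r] | (norm v < r)%N].

Lemma vball_uniq r : uniq (vball r).
Proof.
apply: filter_uniq; apply: allpairs_uniq; try exact: zr_uniq.
by move=> [a b] [c d] _ _ /=.
Qed.

Lemma mem_vball r v : (v \in vball r) = (norm v < r)%N.
Proof.
rewrite mem_filter; case h: (norm v < r)%N; last by [].
rewrite andTb; case: v h => x y h; apply: (allpairs_f (fun a b => (a, b)));
  apply: mem_zr; move: h; rewrite /norm /=; lia.
Qed.


Definition hx (c : vertex) : 'I_4 :=
  if (0 <= c.1)%R then Ordinal (isT : (0 < 4)%N) else Ordinal (isT : (2 < 4)%N).
Definition hy (c : vertex) : 'I_4 :=
  if (0 <= c.2)%R then Ordinal (isT : (1 < 4)%N) else Ordinal (isT : (3 < 4)%N).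
Definition o2 (d : 'I_4) : 'I_4 := ordS (ordS d).

Definition c1 c := vadd c (dir (hx c)).
Definition c2 c := vadd (c1 c) (dir (hy c)).
Definition c3 c := vadd (c2 c) (dir (o2 (hx c))).

Lemma c3_close c : vadd (c3 c) (dir (o2 (hy c))) = c.
Proof.
case: c => x y; rewrite /c3 /c2 /c1 /hx /hy /=.
case: ifP => hx0; case: ifP => hy0; rewrite /vadd /dir /=; congr pair; lia.
Qed.

Lemma ord4K (a : 'I_4) : ordS (ordS (ordS (ordS a))) = a.
Proof. by case: a => [[|[|[|[|]]]] h] //; apply: val_inj. Qed.

Lemma corner_norms c :
  [/\ norm (c1 c) = (norm c).+1, norm (c2 c) = (norm c).+2 &
      norm (c3 c) = (norm c).+1].
Proof.
case: c => x y; rewrite /c3 /c2 /c1 /hx /hy /norm /=.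
case: ifP => hx0; case: ifP => hy0; rewrite /vadd /dir /=; split; lia.
Qed.

Lemma c1_neq_c3 c : c1 c != c3 c.
Proof.
case: c => x y; rewrite /c3 /c2 /c1 /hx /hy /=.
case: ifP => hx0; case: ifP => hy0; rewrite /vadd /dir /=; apply/eqP; case; lia.
Qed.

Definition aport lab n := next_port ((lab (tl lab n))^-1%g (bw lab n).2).

Definition trapseq lab n : seq (vertex * {perm 'I_4}) :=
  let c := hd lab n in
  let a := aport lab n in
  [:: (c, tperm a (hx c)); (c1 c, tperm (ordS a) (hy c));
      (c2 c, tperm (ordS (ordS a)) (o2 (hx c)));
      (c3 c, tperm (ordS (ordS (ordS a))) (o2 (hy c)))].

Lemma step_pair lab v d : walk_step lab (v, d) =
  (vadd v (dir d), lab (vadd v (dir d)) (next_port ((lab v)^-1%g d))).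
Proof. by []. Qed.

Lemma tpermVR (x y : 'I_4) : (tperm x y)^-1%g y = x.
Proof. by rewrite tpermV tpermR. Qed.

Lemma trap_cycle lab n : sat lab (trapseq lab n) -> bw lab n.+4.+1 = bw lab n.+1.
Proof.
rewrite /sat /trapseq /= andbT => /and4P [/eqP e0 /eqP e1 /eqP e2 /eqP e3].
set c := hd lab n in e0 e1 e2 e3 *.
set a := aport lab n in e0 e1 e2 e3 *.
have b1 : bw lab n.+1 = (c, hx c).
  by rewrite bwS_eq -/c -/(aport lab n) -/a e0 tpermL.
have b2 : bw lab n.+2 = (c1 c, hy c).
  by rewrite bwS b1 step_pair e0 tpermVR -/(c1 c) e1 tpermL.
have b3 : bw lab n.+3 = (c2 c, o2 (hx c)).
  by rewrite bwS b2 step_pair e1 tpermVR -/(c2 c) e2 tpermL.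
have b4 : bw lab n.+4 = (c3 c, o2 (hy c)).
  by rewrite bwS b3 step_pair e2 tpermVR -/(c3 c) e3 tpermL.
by rewrite -!bwS bwS b4 step_pair e3 tpermVR c3_close e0 /next_port ord4K tpermL b1.
Qed.


Definition reach (r n : nat) (lab : labeling) : Prop :=
  (forall m, (m <= n)%N -> (norm (tl lab m) < r)%N) /\ (r <= norm (hd lab n))%N.

Lemma hd_norm lab n : (norm (hd lab n) <= (norm (tl lab n)).+1)%N.
Proof. by case: (norm_step (tl lab n) (bw lab n).2). Qed.

Lemma reach_norm r n lab : reach r n lab -> norm (hd lab n) = r.
Proof.
case=> h1 h2; have := h1 n (leqnn n); have := hd_norm lab n; lia.
Qed.

Lemma reach_unique r n n' lab : reach r n lab -> reach r n' lab -> n = n'.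
Proof.
move=> h h'; have hn := reach_norm h; have hn' := reach_norm h'.
case: h h' => [h1 _] [h1' _].
case: (ltngtP n n') => // lt.
  have := h1' n.+1 lt; rewrite tlS hn; lia.
have := h1 n'.+1 lt; rewrite tlS hn'; lia.
Qed.

Lemma vball_agree r r' lab lab' : (r <= r')%N -> agree (vball r') lab lab' ->
  agree (vball r) lab lab'.
Proof.
move=> le h v; rewrite mem_vball => hv; apply: h; rewrite mem_vball; lia.
Qed.

Lemma reach_agree r n lab lab' : agree (vball r) lab lab' -> reach r n lab ->
  (forall m, (m <= n)%N -> bw lab m = bw lab' m) /\ reach r n lab'.
Proof.
move=> ag [h1 h2].
have e : forall m, (m <= n)%N -> bw lab m = bw lab' m.
  apply: walk_agree => m hm; apply: ag; rewrite mem_vball; exact: h1.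
split => //; split.
  by move=> m hm; rewrite /tl -(e m hm); exact: h1.
by rewrite /hd /tl -(e n (leqnn n)).
Qed.

Lemma reach_exists r n lab : (norm v0 < r)%N -> (r <= norm (hd lab n))%N ->
  exists m, (m <= n)%N /\ reach r m lab.
Proof.
move=> h0 hn.
have ex : exists k, (r <= norm (hd lab k))%N by exists n.
case: (ex_minnP ex) => m hm hmin.
exists m; split; first exact: hmin.
split => // -[|j] hj; first by rewrite tl0.
rewrite tlS; case: (ltnP (norm (hd lab j)) r) => // hj'.
have := hmin j hj'; lia.
Qed.

Lemma tl_norm lab j : (norm (tl lab j) <= norm v0 + j)%N.
Proof.
elim: j => [|j IH]; first by rewrite tl0 addn0.
rewrite tlS; have := hd_norm lab j; lia.
Qed.

Lemma bw_agree_ball lab lab' n : agree (vball (norm v0 + n).+1) lab lab' ->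
  forall m, (m <= n)%N -> bw lab m = bw lab' m.
Proof.
move=> ag; apply: walk_agree => m hm; apply: ag; rewrite mem_vball.
have := tl_norm lab m; lia.
Qed.

Definition cyc (lab : labeling) := exists m n, (m < n)%N /\ bw lab m = bw lab n.

Lemma pigeon R T lab : (4 * size (vball R) <= T)%N ->
  (forall m, (m <= T)%N -> tl lab m \in vball R) -> cyc lab.
Proof.
move=> hT hb.
set s := map (bw lab) (iota 0 T.+1).
have [us | /(uniqPn (bw lab 0)) [i [j [ij js e]]]] := boolP (uniq s); last first.
  move: js e; rewrite /s size_map size_iota => js.
  have hi : (i < T.+1)%N by exact: ltn_trans ij js.
  rewrite !(nth_map 0%N) ?size_iota // !nth_iota // !add0n => e.
  by exists i, j.
set A := [seq (v, d) | v <- vball R, d <- enum 'I_4].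
have sub : {subset s <= A}.
  move=> a /mapP [m]; rewrite mem_iota add0n => /andP [_ hm] ->.
  rewrite (surjective_pairing (bw lab m)).
  apply: (@allpairs_f _ _ _ (fun v d => (v, d)) (vball R) (enum (ordinal 4))).
    by apply: hb.
  by rewrite mem_enum.
have := uniq_leq_size us sub.
rewrite /s size_map size_iota size_allpairs size_enum_ord; lia.
Qed.

Lemma trap_props r n lab : reach r n lab ->
  [/\ size (trapseq lab n) = 4%N, uniq (map fst (trapseq lab n)) &
      all (fun vs => (r <= norm vs.1 < r + 3)%N) (trapseq lab n)].
Proof.
move=> h; have hn := reach_norm h.
have [n1 n2 n3] := corner_norms (hd lab n).
have d13 := c1_neq_c3 (hd lab n).
have ne : forall a b, norm a != norm b -> a != b.
  by move=> a b; apply: contraNneq => ->.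
rewrite /trapseq /= n1 n2 n3 hn; split => //.
  rewrite !inE !negb_or.
  repeat (apply/andP; split); try exact: d13. all: try (apply: ne;
    rewrite ?n1 ?n2 ?n3 ?hn; apply/eqP; lia). by [].
by rewrite !andbT; repeat (apply/andP; split); lia.
Qed.

Lemma trapseq_agree r n lab lab' : agree (vball r) lab lab' -> reach r n lab ->
  trapseq lab n = trapseq lab' n.
Proof.
move=> ag h; have [e _] := reach_agree ag h.
have ht : lab (tl lab n) = lab' (tl lab n).
  by apply: ag; rewrite mem_vball; case: h => h1 _; exact: h1.
rewrite /trapseq /aport /hd /tl -(e n (leqnn n)) -/(tl lab n) ht.
by [].
Qed.

End Walk.

Lemma sat_agree S lab lab' s : agree S lab lab' ->
  all (fun vs => vs.1 \in S) s -> sat lab s = sat lab' s.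
Proof.
move=> ag; elim: s => [|vs s IH] //= /andP [h1 h2].
by rewrite /sat /= -/(sat lab s) -/(sat lab' s) IH // ag.
Qed.

Section Main.
Variables (R : realType) (P : probability Lab R) (HP : random_labeling_law P).
Variables (v0 : vertex) (l : 'I_4).

Definition rk k := ((norm v0).+1 + 3 * k)%N.
Definition notrap r (lab : labeling) :=
  forall n, reach v0 l r n lab -> ~~ sat lab (trapseq v0 l lab n).
Definition E k T : set Lab :=
  [set lab | (exists n, (n <= T)%N /\ reach v0 l (rk k) n lab) /\
             forall j, (j < k)%N -> notrap (rk j) lab].

Lemma trap_in_ball r n lab : reach v0 l r n lab ->
  all (fun vs => vs.1 \in vball (r + 3)) (trapseq v0 l lab n).
Proof.
move=> h; have [_ _ al] := trap_props h.
apply: sub_all al => vs /andP [_ h2]; by rewrite mem_vball.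
Qed.

Lemma E_dep k T : dep (vball (rk k)) (E k T).
Proof.
move=> lab lab' ag [[n [hn hr]] hnt]; split.
  by exists n; split => //; exact: (reach_agree ag hr).2.
move=> j hj m hm'.
have ag' : agree (vball (rk j + 3)) lab lab'.
  by apply: vball_agree ag; rewrite /rk; lia.
have agj : agree (vball (rk j)) lab lab' by apply: vball_agree ag'; lia.
have hm : reach v0 l (rk j) m lab := (reach_agree (agree_sym agj) hm').2.
have := hnt j hj m hm.
rewrite (trapseq_agree agj hm) (sat_agree ag') //.
exact: trap_in_ball hm'.
Qed.

Definition nsel k (lab : labeling) : nat := xget 0%N [set n | reach v0 l (rk k) n lab].
Definition gk k (lab : labeling) := trapseq v0 l lab (nsel k lab).

Lemma nsel_reach k T lab : E k T lab -> reach v0 l (rk k) (nsel k lab) lab.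
Proof.
case=> [[n [_ h]] _].
have := @xgetPex nat 0%N [set n | reach v0 l (rk k) n lab].
by apply; exists n.
Qed.

Lemma gk_agree k T lab lab' : agree (vball (rk k)) lab lab' -> E k T lab ->
  gk k lab = gk k lab'.
Proof.
move=> ag hE.
have es : [set n | reach v0 l (rk k) n lab] = [set n | reach v0 l (rk k) n lab'].
  apply/seteqP; split => n /= h; first exact: (reach_agree ag h).2.
  exact: (reach_agree (agree_sym ag) h).2.
rewrite /gk /nsel -es; apply: trapseq_agree ag _.
exact: (nsel_reach hE).
Qed.

Lemma EI_dep k T : dep (vball (rk k + 3)) (E k T `&` [set lab | sat lab (gk k lab)]).
Proof.
move=> lab lab' ag [hE hs].
have agk : agree (vball (rk k)) lab lab' by apply: vball_agree ag; lia.
split; first exact: E_dep agk hE.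
change (sat lab' (gk k lab')); rewrite -(gk_agree agk hE) -(sat_agree ag) //.
exact: trap_in_ball (nsel_reach hE).
Qed.


Lemma Preal (A : set Lab) : measurable A -> exists x : R, P A = x%:E /\ 0 <= x <= 1.
Proof.
move=> mA; have h0 : (0 <= P A)%E := measure_ge0 P A.
have h1 : (P A <= 1)%E := probability_le1 P mA.
move: h0 h1; case: (P A) => [x| |] //= h0 h1.
by exists x; split => //; apply/andP; split; rewrite -lee_fin.
Qed.

Definition q : R := ((24%:R : R)^-1) ^+ 4.

Lemma q_bounds : 0 < q < 1.
Proof.
rewrite /q exprn_gt0 ?invr_gt0 ?ltr0n //= exprn_ilt1 ?invr_ge0 ?ler0n //.
by rewrite invf_lt1 ?ltr0n // ltr1n.
Qed.

Lemma E_meas k T : measurable (E k T).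
Proof. exact: dep_meas (@E_dep k T). Qed.

Lemma E_step k T : (P (E k.+1 T) <= P (E k T) * (1 - q)%:E)%E.
Proof.
set Sg := [set lab | sat lab (gk k lab)].
have mEI : measurable (E k T `&` Sg) := dep_meas (@EI_dep k T).
have sub : E k.+1 T `<=` E k T `\` (E k T `&` Sg).
  move=> lab [[n [hn hr]] hnt].
  have [m [hm hr']] : exists m, (m <= n)%N /\ reach v0 l (rk k) m lab.
    apply: reach_exists; first by rewrite /rk; lia.
    case: hr => _ h; apply: leq_trans h; rewrite /rk; lia.
  have hE : E k T lab.
    split; first by exists m; split => //; apply: leq_trans hm hn.
    by move=> j hj; apply: hnt; lia.
  split => // -[_ hs].
  have := hnt k (ltnSn k) _ (nsel_reach hE).
  by move/negP; apply.
have le1 := le_measure P (mem_set (E_meas k.+1 T))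
   (mem_set (measurableD (E_meas k T) mEI)) sub.
apply: (le_trans le1).
rewrite measureD; last first.
- by apply: (le_lt_trans (probability_le1 P (E_meas k T))); rewrite ltry.
- exact: mEI.
- exact: E_meas.
rewrite setIA setIid.
change (P (E k T) - P (E k T `&` Sg) <= P (E k T) * (1 - q)%:E)%E.
have eI : P (E k T `&` Sg) = (P (E k T) * q%:E)%E.
  apply: (@dep_indep R P HP (vball (rk k)) (E k T) (gk k) 4).
  - exact: vball_uniq.
  - exact: E_dep.
  - move=> lab hE; have [s1 s2 s3] := trap_props (nsel_reach hE).
    split => //; apply: sub_all s3 => vs /andP [h1 _].
    by rewrite mem_vball -leqNgt.
  - by move=> lab lab' ag hE; apply: gk_agree ag hE.
rewrite eI; have [x [-> _]] := Preal (E_meas k T).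
by rewrite -EFinM -EFinM -EFinB lee_fin mulrBr mulr1.
Qed.


Lemma E_bound k T : (P (E k T) <= ((1 - q) ^+ k)%:E)%E.
Proof.
elim: k => [|k IH].
  have [x [-> /andP [_ h]]] := Preal (E_meas 0 T).
  by rewrite lee_fin expr0.
apply: le_trans (E_step k T) _.
have [x [ex hx]] := Preal (E_meas k T).
rewrite ex in IH *.
rewrite -EFinM lee_fin exprSr; rewrite lee_fin in IH.
apply: ler_wpM2r => //; case/andP: q_bounds => _ h; rewrite subr_ge0; exact: ltW.
Qed.

Lemma notcyc_E k lab : ~ cyc v0 l lab -> E k (4 * size (vball (rk k)))%N lab.
Proof.
move=> nc; set T := (4 * size (vball (rk k)))%N; split; last first.
  move=> j _ n hr; apply/negP => hs; apply: nc.
  exists n.+1, n.+4.+1; split; first by lia.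
  by rewrite (trap_cycle hs).
have h0 : (norm v0 < rk k)%N by rewrite /rk; lia.
case: (boolP [exists n : 'I_T.+1, (rk k <= norm (hd v0 l lab n))%N]).
  case/existsP => n hn.
  have [m [hm hr]] := reach_exists h0 hn.
  exists m; split => //; apply: leq_trans hm _; rewrite -ltnS; exact: ltn_ord.
rewrite negb_exists => /forallP hall; exfalso; apply: nc.
apply: (@pigeon v0 l (rk k) T) => // m hm; rewrite mem_vball.
case: m hm => [|j] hj; first by rewrite tl0.
rewrite tlS; have := hall (Ordinal (ltnW hj : (j < T.+1)%N)); rewrite /= -ltnNge //.
Qed.

Lemma cyc_meas : measurable [set lab : Lab | cyc v0 l lab].
Proof.
have -> : [set lab : Lab | cyc v0 l lab] =
    \bigcup_n \bigcup_m [set lab : Lab | (m < n)%N /\ bw v0 l lab m = bw v0 l lab n].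
  apply/seteqP; split => lab.
    by case=> m [n [h e]]; exists n => //; exists m.
  by case=> n _ [m _ [h e]]; exists m, n.
apply: bigcupT_measurable => n; apply: bigcupT_measurable => m.
apply: (@dep_meas (vball (norm v0 + (m + n)).+1)) => lab lab' ag [h e]; split => //.
have H := @bw_agree_ball v0 l lab lab' _ ag.
by rewrite -(H m) ?leq_addr // -(H n) ?leq_addl.
Qed.

Lemma geom_zero (x : R) : 0 <= x -> (forall k, x <= (1 - q) ^+ k) -> x = 0.
Proof.
move=> x0 H; case/andP: q_bounds => q0 q1.
have B : forall k : nat, (1 - q) ^+ k * (1 + k%:R * q) <= 1.
  elim=> [|k IH]; first by rewrite expr0 mul1r mul0r addr0.
  rewrite exprSr -mulrA; apply: le_trans IH.
  apply: ler_wpM2l; first by apply: exprn_ge0; rewrite subr_ge0 ltW.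
  have kp : 0 <= k%:R :> R by exact: ler0n.
  rewrite -natr1 mulrDl mul1r; nra.
apply/eqP; rewrite eq_le x0 andbT; apply/negP => /negP; rewrite -ltNge => xp.
set k := Num.bound ((x * q)^-1).
have xq : 0 < x * q by apply: mulr_gt0.
have hk := archi_boundP (ltW (xq : 0 < x * q) : 0 <= x * q) .
have iq : 0 <= (x * q)^-1 by rewrite invr_ge0 ltW.
move: hk => _; have hk := archi_boundP iq.
have hk' : 1 < x * q * k%:R.
  have e1 : x * q * (x * q)^-1 = 1 by rewrite mulfV ?gt_eqF.
  move: hk; rewrite -/k => hk; nra.
have kp : 0 <= k%:R :> R by exact: ler0n.
have := B k; have := H k.
set y := (1 - q) ^+ k => hxy hy.
have : x * (1 + k%:R * q) <= y * (1 + k%:R * q).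
  apply: ler_wpM2r => //; nra.
nra.
Qed.

End Main.

Theorem theorem4p1 (R : realType) (P : probability Lab R)
    (HP : random_labeling_law P) (v0 : vertex) (l : 'I_4) :
  measurable [set lab : Lab | cycles lab v0 l] /\
  P [set lab : Lab | cycles lab v0 l] = 1%E.
Proof.
have mC : measurable [set lab : Lab | cycles lab v0 l] := cyc_meas v0 l.
split => //.
set C := [set lab : Lab | cycles lab v0 l] in mC *.
have mCc : measurable (~` C) := measurableC mC.
have [x [ex /andP [x0 x1]]] := Preal P mCc.
have x00 : x = 0.
  apply: geom_zero => // k.
  have sub : ~` C `<=` E v0 l k (4 * size (vball (rk v0 k)))%N.
    by move=> lab nc; apply: notcyc_E.
  have := le_measure P (mem_set mCc) (mem_set (E_meas v0 l k _)) sub.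
  have := E_bound HP v0 l k (4 * size (vball (rk v0 k)))%N.
  move=> h1 h2; have := le_trans h2 h1.
  change ((P (~` C) <= ((1 - q R) ^+ k)%:E)%E -> x <= (1 - q R) ^+ k).
  by rewrite ex lee_fin.
have [y [ey _]] := Preal P mC.
have hc := probability_setC P mC.
change (P (~` C) = 1 - P C)%E in hc.
rewrite ex ey x00 in hc.
change (P C = 1%E); rewrite ey.
move: hc; rewrite -EFinB => -[] h; congr EFin; lra.
Qed.
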